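(* For every $n\in\mathbb{N}$ there is a constant $c_n>0$ such that for all $t\in(0,1/2]$ and all $\lambda_1,\dots,\lambda_n>0$ with $\lambda_1\lambda_2\cdots\lambda_n=1$, $$\sqrt{\sum_{i=1}^n(\lambda_i-1)^2}\le c_nt^{-n}\left(\prod_{i=1}^n\big(t+(1-t)\lambda_i\big)-1\right)+c_nt^{-1/2}\sqrt{\prod_{i=1}^n\big(t+(1-t)\lambda_i\big)-1}.$$ *)

(* Defs.v *)
From mathcomp Require Import all_boot all_order all_algebra.
Set Implicit Arguments. Unset Strict Implicit. Unset Printing Implicit Defensive.

(* Main.v *)
Require Import Defs.
From mathcomp Require Import all_boot all_order all_algebra.
From mathcomp Require Import reals.
From mathcomp Require Import exp.
From mathcomp Require Import ring lra.
Import Order.TTheory GRing.Theory Num.Theory.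
Local Open Scope ring_scope.

Section H.
Context {R : realType}.

Lemma ln_le_sub1 (x : R) : 0 < x -> ln x <= x - 1.
Proof. move=> x0; have := @le_ln1Dx R (x - 1). rewrite subrKC; apply; lra. Qed.

Lemma ln_ge_1V (x : R) : 0 < x -> 1 - x^-1 <= ln x.
Proof.
move=> x0; have := ln_le_sub1 x^-1; rewrite invr_gt0 => /(_ x0); rewrite lnV ?posrE //. lra.
Qed.

Lemma key (t lam : R) : 0 < t -> t < 1 -> 0 < lam ->
  t * (1 - (Num.sqrt (t + (1 - t) * lam))^-1) ^+ 2
  <= ln (t + (1 - t) * lam) - (1 - t) * ln lam.
Proof.
move=> t0 t1 l0.
set a := t + (1 - t) * lam.
have a0 : 0 < a by rewrite /a; apply: ltr_pwDl => //; apply: mulr_ge0; lra.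
set s := Num.sqrt a.
have s0 : 0 < s by rewrite sqrtr_gt0.
have sa : s * s = a by rewrite -expr2 sqr_sqrtr // ltW.
have h1 : 1 - lam / a <= ln a - ln lam.
  rewrite -ln_div ?posrE //. have := ln_ge_1V (a / lam) (divr_gt0 a0 l0).
  by rewrite invf_div.
have h2 : 2 * (1 - s^-1) <= ln a.
  rewrite -sa lnM ?posrE //. have := ln_ge_1V s s0. lra.
have e : (1 - t) * (1 - lam / a) = t * (s^-1 * s^-1) - t.
  rewrite -invfM sa mulrBr mulr1 mulrA -[(1 - t) * lam](addKr t) -/a.
  rewrite mulrDl mulNr divff ?lt0r_neq0 //; ring.
have : (1 - t) * (1 - lam / a) <= (1 - t) * (ln a - ln lam).
  by apply: ler_wpM2l => //; lra.
rewrite e => h3.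
have -> : t * (1 - s^-1) ^+ 2 = (t * (s^-1 * s^-1) - t) + t * (2 * (1 - s^-1)) by ring.
have : t * (2 * (1 - s^-1)) <= t * ln a by apply: ler_wpM2l => //; lra.
lra.
Qed.

Lemma ln_prod (n : nat) (f : 'I_n -> R) : (forall i, 0 < f i) ->
  0 < \prod_(i < n) f i /\ ln (\prod_(i < n) f i) = \sum_(i < n) ln (f i).
Proof.
move=> fp.
apply: (big_rec2 (fun p s => 0 < p /\ ln p = s)); first by rewrite ln1.
move=> i p s _ [p0 <-]; split; first by rewrite mulr_gt0.
by rewrite lnM ?posrE.
Qed.

Lemma sqrt_le (x y : R) : 0 <= y -> x <= y ^+ 2 -> Num.sqrt x <= y.
Proof.
move=> y0 h; apply: le_trans (ler_wsqrtr h) _; rewrite sqrtr_sqr ger0_norm //.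
Qed.
End H.

Theorem mainTheorem13 (R : realType) (n : nat) :
  exists c : R, 0 < c /\
  forall (t : R) (lam : 'I_n -> R),
    0 < t -> t <= 2^-1 ->
    (forall i, 0 < lam i) ->
    \prod_(i < n) lam i = 1 ->
    Num.sqrt (\sum_(i < n) (lam i - 1) ^+ 2)
      <= c * (t ^+ n)^-1 * (\prod_(i < n) (t + (1 - t) * lam i) - 1)
         + c * (Num.sqrt t)^-1 * Num.sqrt (\prod_(i < n) (t + (1 - t) * lam i) - 1).
Proof.
have n0R : (0 : R) <= n%:R := ler0n R n.
exists (10 * n%:R + 12); split; first lra.
move=> t lam t0 th lp prod1.
have t1 : t < 1 by lra.
pose a i := t + (1 - t) * lam i.
pose P := \prod_(i < n) a i.
have -> : \prod_(i < n) (t + (1 - t) * lam i) = P by [].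
have ap i : 0 < a i.
  by rewrite /a; apply: ltr_pwDl => //; apply: mulr_ge0; [lra | exact: ltW].
have [P0 lnP] := ln_prod _ _ ap.
have [_ lnL] := ln_prod _ _ lp.
rewrite prod1 ln1 in lnL.
pose e i := (1 - (Num.sqrt (a i))^-1) ^+ 2.
have hk : t * \sum_i e i <= ln P.
  rewrite lnP mulr_sumr.
  have -> : \sum_i ln (a i) = \sum_i (ln (a i) - (1-t) * ln (lam i)).
    by rewrite sumrB -mulr_sumr -lnL mulr0 subr0.
  by apply: ler_sum => i _; apply: key.
pose d := P - 1.
have hd : ln P <= d := ln_le_sub1 _ P0.
have e0 i : 0 <= e i by apply: sqr_ge0.
have se0 : 0 <= \sum_i e i by apply: sumr_ge0 => i _.
have d0 : 0 <= d.
  apply: le_trans hd; apply: le_trans hk; apply: mulr_ge0 => //; exact: ltW.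
have st0 : 0 < Num.sqrt t by rewrite sqrtr_gt0.
have c0 : 0 <= 10 * n%:R + 12 :> R by lra.
have T1 : 0 <= (10 * n%:R + 12) * (t ^+ n)^-1 * d.
  by apply: mulr_ge0 => //; apply: mulr_ge0 => //; by rewrite invr_ge0 exprn_ge0 // ltW.
have T2 : 0 <= (10 * n%:R + 12) * (Num.sqrt t)^-1 * Num.sqrt d.
  by apply: mulr_ge0; [apply: mulr_ge0 => //; rewrite invr_ge0 ltW | apply: sqrtr_ge0].
rewrite -/d.
case: (boolP [forall i, a i <= 4]) => [/forallP hall | /forallPn [j hj]].
- have hi i : (lam i - 1) ^+ 2 <= 144 * e i.
    have ai0 := ap i.
    set s := Num.sqrt (a i).
    have s0 : 0 < s by rewrite sqrtr_gt0.
    have sa : s * s = a i by rewrite -expr2 sqr_sqrtr // ltW.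
    have s2 : s <= 2 by have := hall i; nra.
    set u := s^-1.
    have su : s * u = 1 by rewrite divff // lt0r_neq0.
    have u0 : 0 < u by rewrite invr_gt0.
    have u2 : 2^-1 <= u by nra.
    have ee : e i = (s - 1) ^+ 2 * u ^+ 2.
      by rewrite /e -/s -/u -exprMn; congr (_ ^+ 2); rewrite mulrBl su mul1r.
    rewrite ee.
    have wx : (1 - t) * (lam i - 1) = (s - 1) * (s + 1).
      by rewrite mulrBr mulr1; have : a i = t + (1 - t) * lam i by []; nra.
    have h1 : (lam i - 1) ^+ 2 <= 4 * ((1 - t) * (lam i - 1)) ^+ 2.
      rewrite exprMn mulrA; rewrite -{1}[_ ^+ 2]mul1r; apply: ler_wpM2r;
        [exact: sqr_ge0 | nra].
    apply: le_trans h1 _.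
    rewrite wx exprMn.
    have h3 : (s + 1) ^+ 2 <= 9 by nra.
    have h5 : 2^-1 ^+ 2 <= u ^+ 2 by nra.
    have sq0 : 0 <= (s - 1) ^+ 2 by apply: sqr_ge0.
    have : (s - 1) ^+ 2 * (s + 1) ^+ 2 <= (s - 1) ^+ 2 * 9 by apply: ler_wpM2l.
    have : (s - 1) ^+ 2 * 2^-1 ^+ 2 <= (s - 1) ^+ 2 * u ^+ 2 by apply: ler_wpM2l.
    have -> : (2^-1 : R) ^+ 2 = 4^-1 by rewrite exprVn; congr (_^-1); rewrite expr2 -natrM.
    lra.
  have hQ : \sum_i (lam i - 1) ^+ 2 <= 144 * \sum_i e i.
    by rewrite mulr_sumr; apply: ler_sum => i _; apply: hi.
  have hQ2 : \sum_i (lam i - 1) ^+ 2 <= 144 * d / t.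
    rewrite ler_pdivlMr //.
    have : t * \sum_i e i <= d by apply: le_trans hk hd.
    have := ler_wpM2r (ltW t0) hQ.
    lra.
  have hS : Num.sqrt (\sum_i (lam i - 1) ^+ 2) <= 12 * (Num.sqrt t)^-1 * Num.sqrt d.
    apply: sqrt_le.
      by apply: mulr_ge0; [apply: mulr_ge0 => //; rewrite invr_ge0 ltW | apply: sqrtr_ge0].
    rewrite !exprMn exprVn !sqr_sqrtr // ?(ltW t0) //.
    have -> : (12 : R) ^+ 2 = 144 by rewrite expr2 -natrM.
    by rewrite mulrAC.
  apply: le_trans hS _.
  have : 12 * (Num.sqrt t)^-1 * Num.sqrt d <= (10 * n%:R + 12) * (Num.sqrt t)^-1 * Num.sqrt d.
    rewrite -!mulrA; apply: ler_wpM2r; last lra.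
    by apply: mulr_ge0; [rewrite invr_ge0 ltW | apply: sqrtr_ge0].
  lra.
- rewrite -ltNge in hj.
  have ej : 4^-1 <= e j.
    have aj0 := ap j.
    set s := Num.sqrt (a j).
    have s0 : 0 < s by rewrite sqrtr_gt0.
    have sa : s * s = a j by rewrite -expr2 sqr_sqrtr // ltW.
    have s2 : 2 < s by nra.
    set u := s^-1.
    have su : s * u = 1 by rewrite divff // lt0r_neq0.
    have u0 : 0 < u by rewrite invr_gt0.
    have u2 : u < 2^-1 by nra.
    rewrite /e -/s -/u.
    have -> : (4^-1 : R) = 2^-1 ^+ 2 by rewrite exprVn; congr (_^-1); rewrite expr2 -natrM.
    nra.
  have td : t * 4^-1 <= d.
    apply: le_trans hd; apply: le_trans hk; apply: ler_wpM2l; first exact: ltW.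
    apply: le_trans ej _; rewrite (bigD1 j) //= lerDl; apply: sumr_ge0 => i _ //.
  have n0 : (0 < n)%N by apply: leq_ltn_trans (leq0n j) (ltn_ord j).
  pose T := t ^+ n.-1.
  have tn : t ^+ n = t * T by rewrite /T -{1}(prednK n0) exprS.
  have T0 : 0 < T by rewrite exprn_gt0.
  have T1' : T <= 1 by rewrite exprn_ile1 // ltW.
  have hP i : a i * T <= P.
    rewrite /P (bigD1 i) //= [a i * _]mulrC [a i * \prod_(k | k != i) a k]mulrC.
    apply: ler_wpM2r; first exact: ltW (ap i).
    have -> : T = \prod_(k | k != i) t by rewrite prodr_const cardC1 card_ord.
    apply: ler_prod => k _; rewrite ltW //= /a lerDl; apply: mulr_ge0; [lra | exact: ltW].
  pose M := 2 * P / T.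
  have hl i : lam i <= M.
    have l0 := lp i.
    have h1 : (1 - t) * lam i <= a i by rewrite /a lerDr; exact: ltW.
    have h2 : a i <= P / T by rewrite ler_pdivlMr.
    rewrite /M -mulrA; nra.
  have P1 : 1 <= P by rewrite /d subr_ge0 in d0.
  have hM1 : 1 <= M.
    have : P <= P / T by rewrite ler_pdivlMr //; nra.
    rewrite /M -mulrA; lra.
  have hi i : (lam i - 1) ^+ 2 <= M ^+ 2.
    have := lp i; have := hl i; nra.
  have hQ : \sum_(i < n) (lam i - 1) ^+ 2 <= n%:R * M ^+ 2.
    apply: le_trans (ler_sum _ (fun i _ => hi i)) _.
    by rewrite sumr_const card_ord mulr_natl.
  have n1 : 1 <= n%:R :> R by rewrite ler1n.
  have M0 : 0 <= M by lra.
  have hS : Num.sqrt (\sum_(i < n) (lam i - 1) ^+ 2) <= n%:R * M.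
    apply: sqrt_le; first by apply: mulr_ge0.
    apply: le_trans hQ _.
    have : 0 <= (n%:R - 1) * n%:R * M ^+ 2.
      by apply: mulr_ge0; [apply: mulr_ge0; lra | exact: sqr_ge0].
    have -> : (n%:R * M) ^+ 2 = n%:R ^+ 2 * M ^+ 2 :> R by rewrite exprMn.
    move: (M ^+ 2) (n%:R : R) => m k; nra.
  have eq : n%:R * M = (2 * n%:R * P * t) * (t ^+ n)^-1.
    rewrite /M tn; field; apply/andP; split; exact: lt0r_neq0.
  have hc : 2 * n%:R * P * t <= (10 * n%:R + 12) * d.
    have Pd : P = 1 + d by rewrite /d addrC subrK.
    rewrite Pd.
    have h1 : 0 <= n%:R * (d - t * 4^-1) by apply: mulr_ge0 => //; lra.
    have h2 : 0 <= n%:R * d * (1 - t) by apply: mulr_ge0; [apply: mulr_ge0 | lra].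
    nra.
  apply: le_trans hS _; rewrite eq.
  have : 2 * n%:R * P * t * (t ^+ n)^-1 <= (10 * n%:R + 12) * (t ^+ n)^-1 * d.
    rewrite [X in _ <= X]mulrAC; apply: ler_wpM2r => //; by rewrite invr_ge0 exprn_ge0 // ltW.
  lra.
Qed.
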